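(* Let $\mathbb{k}$ be an algebraically closed field of characteristic $0$, $r$ a positive integer and $\lambda\in\mathbb{k}^*\setminus\{\pm1\}$. Index rows by $(e,s)$ and columns by $(e',s')$ with $e,e'\in\{0,1\}$, $s,s'\in\{0,\dots,r-1\}$, ordered lexicographically. Then: (1) for every $a\in\mathbb{k}$, the $2r\times2r$ matrix $\big(\lambda^{(-1)^e(2s'+e')}(a+2s'+e')^s\big)$ is invertible; (2) for every $a\in\mathbb{k}$ and $b\in\mathbb{Q}$, the $2r\times2r$ matrix $\big(\lambda^{(-1)^e(b+2s'+e')}(a+2s'+e')^s\big)$ is invertible.
   Context: Convention: $0^0=1$. For $b\in\mathbb{Q}$, $\lambda^b$ denotes a fixed choice of $b$-th power of $\lambda$ (for $b=p/q$ in lowest terms, $\lambda^b=\mu^p$ for a fixed $\mu$ with $\mu^q=\lambda$), and $\lambda^{\pm(b+t)}:=(\lambda^b)^{\pm1}\lambda^{\pm t}$ for integers $t$. *)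

(* Defs.v *)
From HB Require Import structures.
From mathcomp Require Import all_boot all_order all_algebra all_field.
Set Implicit Arguments. Unset Strict Implicit. Unset Printing Implicit Defensive.
Import Order.TTheory GRing.Theory Num.Theory.
Local Open Scope ring_scope.

(* Rows/columns of a 2r x 2r matrix are indexed by i : 'I_(2*r); the
   lexicographic order on pairs (e,s) with e in {0,1}, s in {0..r-1}
   identifies i with (e,s) = (i %/ r, i %% r), i.e. i = e*r + s. *)

Definition lam_exp (e s' e' : nat) : int := (-1) ^+ e * ((2 * s' + e')%N)%:Z.

Definition mat1 (k : fieldType) (r : nat) (lam a : k) : 'M[k]_(2 * r) :=
  \matrix_(i < 2 * r, j < 2 * r)
    (lam ^ lam_exp (i %/ r) (j %% r) (j %/ r)
     * (a + ((2 * (j %% r) + j %/ r)%N)%:R) ^+ (i %% r)).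

(* lam^b for b : rat, given the fixed choice mu of a (denq b)-th root of lam:
   lam^b := mu^(numq b). *)
Definition ratpow (k : fieldType) (mu : k) (b : rat) : k := mu ^ numq b.

(* The matrix of part (2): entry (e,s),(e',s') is
   lam^((-1)^e (b+2s'+e')) * (a + 2s'+e')^s, where
   lam^(+-(b+t)) := (lam^b)^(+-1) lam^(+-t). *)
Definition mat2 (k : fieldType) (r : nat) (lam mu : k) (b : rat) (a : k)
  : 'M[k]_(2 * r) :=
  \matrix_(i < 2 * r, j < 2 * r)
    (ratpow mu b ^ ((-1) ^+ (i %/ r) : int)
     * lam ^ lam_exp (i %/ r) (j %% r) (j %/ r)
     * (a + ((2 * (j %% r) + j %/ r)%N)%:R) ^+ (i %% r)).

(* Main.v *)
Require Import Defs.
From HB Require Import structures.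
From mathcomp Require Import all_boot all_order all_algebra all_field.
From mathcomp Require Import ring zify.
Set Implicit Arguments. Unset Strict Implicit. Unset Printing Implicit Defensive.
Import Order.TTheory GRing.Theory Num.Theory.
Local Open Scope ring_scope.

Lemma natr_inj0 (k : fieldType) : [pchar k] =i pred0 -> injective (fun t : nat => t%:R : k).
Proof.
move=> /pcharf0P H i j /= eij.
wlog lij : i j eij / (i <= j)%N.
  by move=> W; case: (leqP i j) => [/W->//|/ltnW /(W j i (esym eij))->].
apply/eqP; rewrite eqn_leq lij /= -subn_eq0 -H natrB // eij subrr //.
Qed.

Lemma roots0 (k : fieldType) (a : k) : [pchar k] =i pred0 -> forall N (p : {poly k}),
  (size p <= N)%N -> (forall t, (t < N)%N -> p.[a + t%:R] = 0) -> p = 0.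
Proof.
move=> ch N p sp hp; apply/eqP; apply: contraT => pn0.
have := @max_poly_roots _ p [seq (a + t%:R : k) | t <- iota 0 N] pn0.
rewrite size_map size_iota map_inj_uniq ?iota_uniq; last by move=> x y /addrI; exact: natr_inj0.
have -> : all (root p) [seq (a + t%:R : k) | t <- iota 0 N].
  by apply/allP => x /mapP [t]; rewrite mem_iota add0n => /andP[_ /hp tN] ->; apply/eqP.
by move=> /(_ isT isT); rewrite ltnNge sp.
Qed.

Lemma key (k : fieldType) (mu a : k) : [pchar k] =i pred0 -> mu != 0 -> mu != 1 ->
  forall m n (p q : {poly k}), (size p <= n)%N -> (size q <= m)%N ->
  (forall t, (t < n + m)%N -> mu ^+ t * p.[a + t%:R] + q.[a + t%:R] = 0) -> p = 0 /\ q = 0.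
Proof.
move=> ch mu0 mu1; elim=> [|m IH] n p q sp sq h.
  have q0 : q = 0 by apply/eqP; rewrite -size_poly_eq0 -leqn0.
  subst q; split=> //; apply: (roots0 ch (a:=a) sp) => t tn.
  have := h t; rewrite addn0 hornerC addr0 => /(_ tn) /eqP.
  by rewrite mulf_eq0 expf_eq0 (negPf mu0) andbF => /eqP.
set X1 : {poly k} := 'X + 1.
have sX1 : size X1 = 2 by rewrite size_XaddC.
set pt := mu *: (p \Po X1) - p.
set qt := (q \Po X1) - q.
have spt : (size pt <= n)%N.
  apply: leq_trans (size_polyD _ _) _; rewrite geq_max size_polyN sp andbT.
  by apply: leq_trans (size_scale_leq _ _) _; rewrite size_comp_poly2.
have sqt : (size qt <= m)%N.
  apply/leq_sizeP => j jm; rewrite coefB.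
  have [jq|] := leqP (size q) j.
    rewrite (nth_default 0 jq) (nth_default 0) ?subr0 // size_comp_poly2 //.
  move=> jq; have jE : j = (size q).-1.
    by apply/eqP; rewrite eqn_leq -ltnS (ltn_predK jq) jq /=; rewrite -ltnS (ltn_predK jq) (leq_trans sq).
  have := lead_coef_comp q (_ : (1 < size X1)%N); rewrite sX1 => /(_ isT).
  rewrite lead_coefXaddC expr1n mulr1 /lead_coef size_comp_poly2 // -jE => ->.
  by rewrite subrr.
have pt0 : pt = 0.
  apply: (proj1 (IH n pt qt spt sqt _)) => t tn.
  rewrite /pt /qt !hornerE !horner_comp /X1 !hornerE -addrA natr1.
  have h1 := h t.+1; have h0 := h t.
  rewrite addnS ltnS in h1; rewrite addnS in h0.
  have e1 := h1 tn; have e0 := h0 (ltnW tn).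
  transitivity ((mu ^+ t.+1 * p.[a + t.+1%:R] + q.[a + t.+1%:R]) - (mu ^+ t * p.[a + t%:R] + q.[a + t%:R])).
    rewrite exprS mulrBr mulrA [mu ^+ t * mu]mulrC opprD !addrA; congr (_ - _); exact: addrAC.
  by rewrite e0 e1 subrr.
have p0 : p = 0.
  apply/eqP; apply: contraT => pn0.
  move/eqP: pt0; rewrite /pt subr_eq0 => /eqP /(congr1 lead_coef).
  rewrite lead_coefZ lead_coef_comp ?sX1 // lead_coefXaddC expr1n mulr1.
  move/eqP; rewrite -subr_eq0 -{2}[lead_coef p]mul1r -mulrBl mulf_eq0 subr_eq0 (negPf mu1) /=.
  by rewrite lead_coef_eq0 (negPf pn0).
split=> //; subst p.
apply: (roots0 ch (a := a) (N := n + m.+1)); first by apply: leq_trans sq _; rewrite leq_addl.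
by move=> t /h; rewrite horner0 mulr0 add0r.
Qed.


Lemma div_hi (r : nat) (i : 'I_(2 * r)) : ~~ (i < r)%N -> (i %/ r)%N = 1%N.
Proof.
move=> hi; have r0 : (0 < r)%N by case: r i hi => [[]|].
apply/eqP; rewrite eqn_leq -ltnS ltn_divLR // leq_divRL // mul1n.
rewrite ltn_ord /= leqNgt; exact: hi.
Qed.

Lemma lam_exp0 s e : lam_exp 0 s e = ((2 * s + e)%N)%:Z.
Proof. by rewrite /lam_exp expr0 mul1r. Qed.
Lemma lam_exp1 s e : lam_exp 1 s e = - ((2 * s + e)%N)%:Z.
Proof. by rewrite /lam_exp expr1 mulN1r. Qed.

Lemma core (k : fieldType) (r : nat) (lam a : k) (w : 'I_(2 * r) -> k) :
  [pchar k] =i pred0 -> (0 < r)%N ->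
  lam != 0 -> lam != 1 -> lam != -1 -> (forall i, w i != 0) ->
  (\matrix_(i, j) (w i * mat1 r lam a i j)) \in unitmx.
Proof.
move=> ch r0 l0 l1 lN1 w0.
rewrite unitmxE unitfE; apply/negP => /det0P [v vn0 vM].
pose u i := v 0 i * w i.
pose P : {poly k} := \sum_(i < 2 * r | (i < r)%N) u i *: 'X^(i %% r).
pose Q : {poly k} := \sum_(i < 2 * r | ~~ (i < r)%N) u i *: 'X^(i %% r).
have sP : (size P <= r)%N.
  apply: (leq_trans (size_sum _ _ _)); apply/bigmax_leqP => i _.
  by apply: leq_trans (size_scale_leq _ _) _; rewrite size_polyXn ltn_mod.
have sQ : (size Q <= r)%N.
  apply: (leq_trans (size_sum _ _ _)); apply/bigmax_leqP => i _.
  by apply: leq_trans (size_scale_leq _ _) _; rewrite size_polyXn ltn_mod.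
have mu0 : lam ^+ 2 != 0 by rewrite expf_neq0.
have mu1 : lam ^+ 2 != 1.
  by rewrite -subr_eq0 subr_sqr_1 mulf_neq0 // ?subr_eq0 // addr_eq0.
have eq t : (t < r + r)%N -> (lam ^+ 2) ^+ t * P.[a + t%:R] + Q.[a + t%:R] = 0.
  move=> tr.
  have t2 : (t %% 2 = 0 \/ t %% 2 = 1)%N by lia.
  have jlt : ((t %% 2) * r + t %/ 2 < 2 * r)%N by case: t2 => ->; lia.
  pose j := Ordinal jlt.
  have jm : (j %% r = t %/ 2)%N by rewrite /= modnMDl modn_small //; lia.
  have jd : (j %/ r = t %% 2)%N by rewrite /= divnMDl // divn_small ?addn0 //; lia.
  have jt : (2 * (j %% r) + j %/ r = t)%N by rewrite jm jd; case: t2 => e; lia.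
  move/matrixP: (vM) => /(_ 0 j); rewrite !mxE (bigID (fun i : 'I_(2*r) => (i < r)%N)) /=.
  have E1 : \sum_(i < 2 * r | (i < r)%N)
     v 0 i * (\matrix_(i0, j0) (w i0 * mat1 r lam a i0 j0)) i j = lam ^+ t * P.[a + t%:R].
    rewrite horner_sum mulr_sumr; apply: eq_bigr => i hi.
    rewrite !mxE (divn_small hi) lam_exp0 jt hornerZ hornerXn /u -exprnP.
    ring.
  have E2 : \sum_(i < 2 * r | ~~ (i < r)%N)
     v 0 i * (\matrix_(i0, j0) (w i0 * mat1 r lam a i0 j0)) i j = (lam ^+ t)^-1 * Q.[a + t%:R].
    rewrite horner_sum mulr_sumr; apply: eq_bigr => i hi.
    rewrite !mxE (div_hi hi) lam_exp1 jt hornerZ hornerXn /u -exprnN.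
    ring.
  rewrite E1 E2 => h.
  have lt0 : lam ^+ t != 0 by rewrite expf_neq0.
  have := congr1 (fun x => lam ^+ t * x) h.
  rewrite mulr0 mulrDr mulVKf // mulrA -exprD addnn -mul2n exprM.
  by [].
have [P0 Q0] := key (a := a) ch mu0 mu1 sP sQ eq.
have u0 i : u i = 0.
  case hi: (i < r)%N.
    have := congr1 (fun p : {poly k} => p`_i) P0; rewrite coef0 /P coef_sum (bigD1 i) //=.
    rewrite coefZ coefXn modn_small // eqxx mulr1 big1 ?addr0 //.
    move=> i' /andP[hi' ne]; rewrite coefZ coefXn modn_small //.
    suff -> : (i == i' :> nat) = false by rewrite mulr0.
    by apply/negbTE; rewrite eq_sym; exact: ne.
  have := congr1 (fun p : {poly k} => p`_(i %% r)) Q0; rewrite coef0 /Q coef_sum (bigD1 i) ?hi //=.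
  rewrite coefZ coefXn eqxx mulr1 big1 ?addr0 //.
  move=> i' /andP[hi' ne]; rewrite coefZ coefXn.
  suff -> : (i %% r == i' %% r)%N = false by rewrite mulr0.
  apply/negP => /eqP e; move/negP: ne; rewrite eq_sym; apply; apply/eqP/val_inj => /=.
  by rewrite (divn_eq i' r) (divn_eq i r) (div_hi hi') (div_hi (negbT hi)) e.
move/negP: vn0; apply; apply/eqP/matrixP => x i; rewrite ord1 mxE.
by have := u0 i; rewrite /u => /eqP; rewrite mulf_eq0 (negPf (w0 i)) orbF => /eqP.
Qed.

Theorem corollary2p14 (k : closedFieldType) (r : nat) (lam : k) :
  [pchar k] =i pred0 -> (0 < r)%N ->
  lam != 0 -> lam != 1 -> lam != -1 ->
  (forall a : k, mat1 r lam a \in unitmx) /\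
  (forall (a : k) (b : rat) (mu : k), mu ^+ `|denq b|%N = lam ->
     mat2 r lam mu b a \in unitmx).
Proof.
move=> ch r0 l0 l1 lN1; split.
  move=> a.
  have -> : mat1 r lam a = \matrix_(i, j) ((fun _ => 1) i * mat1 r lam a i j).
    by apply/matrixP => i j; rewrite [RHS]mxE /= mul1r.
  by apply: core => // i; exact: oner_neq0.
move=> a b mu hmu.
have mu0 : mu != 0.
  apply/negP => /eqP m0; move: hmu; rewrite m0 expr0n.
  by case: (_ == _) => /= h; [move/eqP: l1; apply; rewrite -h | move/eqP: l0; apply; rewrite -h].
have -> : mat2 r lam mu b a =
    \matrix_(i, j) ((fun i : 'I_(2 * r) => ratpow mu b ^ ((-1) ^+ (i %/ r) : int)) i * mat1 r lam a i j).
  by apply/matrixP => i j; rewrite [RHS]mxE /mat2 /mat1 !mxE mulrA.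
apply: core => // i; apply: expfz_neq0; exact: expfz_neq0.
Qed.
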